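(* Let $0\le\ell\le r$. Among all ideals $[I_0,\dots,I_\ell]$ of $\Omega_{H_\ell}$ with $I_0=p\mathbb{Z}$, the only prime ideal is $$\mathcal L^\ell(p)=[(p),J_{1,0}(p),\dots,J_{\ell,0}(p)].$$
   Context: Fix a prime $p$ and an integer $r\ge0$. For $0\le k\le r$ let $R_k$ be the commutative ring which is free as a $\mathbb{Z}$-module with basis $X_{k,0},\dots,X_{k,k}$ and multiplication $X_{k,i}X_{k,j}=p^{k-\max(i,j)}X_{k,\min(i,j)}$; thus $X_{k,k}=1$, and an integer $n$ is identified with $nX_{k,k}$. For $0\le k\le\ell\le r$ define: the additive map $\mathrm{ind}^\ell_k:R_k\to R_\ell$, $X_{k,i}\mapsto X_{\ell,i}$; the ring homomorphism $\mathrm{res}^\ell_k:R_\ell\to R_k$, $\mathrm{res}^\ell_k(X_{\ell,i})=p^{\ell-k}X_{k,i}$ if $i\le k$ and $=p^{\ell-i}$ if $i\ge k$; and the multiplicative map $\mathrm{jnd}^\ell_k:R_k\to R_\ell$, $$\mathrm{jnd}^\ell_k\Big(\sum_{i=0}^k m_iX_{k,i}\Big)=m_kX_{\ell,\ell}+\sum_{k\le i<\ell}\frac{m_k^{p^{\ell-i}}-m_k^{p^{\ell-i-1}}}{p^{\ell-i}}X_{\ell,i}+\sum_{0\le i<k}\frac{(\sum_{s=i}^k m_sp^{k-s})^{p^{\ell-k}}-(\sum_{s=i+1}^k m_sp^{k-s})^{p^{\ell-k}}}{p^{\ell-i}}X_{\ell,i}$$ ($m_i\in\mathbb{Z}$).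 For $k=\ell$ these maps are the identity. These data form the Burnside Tambara functor on $\mathbb{Z}/p^r\mathbb{Z}$; keeping indices $\le n$ gives $\Omega_{H_n}$. An ideal of $\Omega_{H_n}$ is a sequence $[I_0,\dots,I_n]$ of ideals $I_k\subseteq R_k$ such that for every $1\le k\le n$: $\mathrm{ind}^k_{k-1}(I_{k-1})\subseteq I_k$, $\mathrm{res}^k_{k-1}(I_k)\subseteq I_{k-1}$, $\mathrm{jnd}^k_{k-1}(I_{k-1})\subseteq I_k$. It is proper if $I_0\ne R_0$. A proper ideal is prime if for all $0\le\ell'\le k\le n$, $a\in R_k$, $b\in R_{\ell'}$: whenever $(\mathrm{jnd}^m_i\mathrm{res}^k_i(a))\cdot(\mathrm{jnd}^m_j\mathrm{res}^{\ell'}_j(b))\in I_m$ for all $0\le i\le k$, $0\le j\le\ell'$, $m=\max(i,j)$, then $a\in I_k$ or $b\in I_{\ell'}$. For an ideal $I\subseteq R_{k-1}$, $L(I)=(\mathrm{res}^k_{k-1})^{-1}(I)\subseteq R_k$; for $\mathscr I=[I_0,\dots,I_{k-1}]$, $\mathcal L\mathscr I=[I_0,\dots,I_{k-1},L(I_{k-1})]$, $\mathcal L^n$ its iterate, $(p)=[p\mathbb{Z}]$. For $0\le j\le i$, $F_{i,j}=X_{i,j}-p^{i-j}$; for $i\ge1$, $J_{i,0}(x)\subseteq R_i$ is the ideal generated by $x,F_{i,0},\dots,F_{i,i-1}$. *)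

(* Defs.v *)
(* The Burnside Tambara functor on Z/p^r, truncated at level n. *)
From HB Require Import structures.
From mathcomp Require Import all_boot all_order all_algebra.
Unset Printing Implicit Defensive.
Import Order.TTheory GRing.Theory Num.Theory.
Local Open Scope ring_scope.

(* R_k : element = coefficient vector (m_0,...,m_k) w.r.t. X_{k,0..k}. *)
Definition R (k : nat) := {ffun 'I_k.+1 -> int}.

Definition co (k : nat) (a : R k) (i : nat) : int :=
  if (i <= k)%N then a (@inord k i) else 0.

(* multiplication: X_{k,i} X_{k,j} = p^(k - max i j) X_{k, min i j} *)
Definition mulR (p k : nat) (a b : R k) : R k :=
  [ffun m : 'I_k.+1 => \sum_(i < k.+1) \sum_(j < k.+1)
     (if minn i j == m then a i * b j * (p%:Z) ^+ (k - maxn i j) else 0)].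

Definition cst (k : nat) (x : int) : R k :=
  [ffun m : 'I_k.+1 => if val m == k then x else 0].

(* ind^l_k : X_{k,i} |-> X_{l,i} *)
Definition ind (k l : nat) (a : R k) : R l := [ffun i : 'I_l.+1 => co k a i].

Definition res (p l k : nat) (a : R l) : R k :=
  [ffun j : 'I_k.+1 =>
     if (j < k)%N then (p%:Z) ^+ (l - k) * co l a j
     else \sum_(i < l.+1 | (k <= i)%N) (p%:Z) ^+ (l - i) * a i].

Definition Ssum (p k : nat) (a : R k) (i : nat) : int :=
  \sum_(s < k.+1 | (i <= s)%N) a s * (p%:Z) ^+ (k - s).

(* jnd^l_k (integer divisions are exact) *)
Definition jnd (p k l : nat) (a : R k) : R l :=
  [ffun i : 'I_l.+1 =>
     if val i == l then co k a k
     else if (k <= i)%N then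
       ((co k a k ^+ (p ^ (l - i)) - co k a k ^+ (p ^ (l - i - 1))) %/ ((p%:Z) ^+ (l - i)))%Z
     else
       ((Ssum p k a i ^+ (p ^ (l - k)) - Ssum p k a i.+1 ^+ (p ^ (l - k)))
          %/ ((p%:Z) ^+ (l - i)))%Z].

Definition is_idealR (p k : nat) (I : R k -> Prop) : Prop :=
  [/\ I 0,
      (forall a b, I a -> I b -> I (a + b)),
      (forall a, I a -> I (- a)) &
      (forall c a, I a -> I (mulR p k c a))].

(* an ideal [I_0, ..., I_n] of Omega_{H_n} (only levels k <= n matter) *)
Definition idfamily := forall k : nat, R k -> Prop.

Definition is_ideal (p n : nat) (I : idfamily) : Prop :=
  (forall k, (k <= n)%N -> is_idealR p k (I k)) /\
  (forall k, (k < n)%N ->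
     [/\ (forall a : R k, I k a -> I k.+1 (ind k k.+1 a)),
         (forall a : R k.+1, I k.+1 a -> I k (res p k.+1 k a)) &
         (forall a : R k, I k a -> I k.+1 (jnd p k k.+1 a))]).

Definition proper (I : idfamily) : Prop := ~ (forall a : R 0, I 0 a).

Definition prime_ideal (p n : nat) (I : idfamily) : Prop :=
  proper I /\
  forall (l' k : nat), (l' <= k)%N -> (k <= n)%N ->
  forall (a : R k) (b : R l'),
    (forall i j, (i <= k)%N -> (j <= l')%N ->
       I (maxn i j) (mulR p (maxn i j) (jnd p i (maxn i j) (res p k i a))
                            (jnd p j (maxn i j) (res p l' j b)))) ->
    I k a \/ I l' b.

Fixpoint Lp (p : nat) (k : nat) : R k -> Prop :=
  match k return R k -> Prop with
  | 0 => fun a => (p%:Z %| a ord0)%Z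
  | k'.+1 => fun a => Lp p k' (res p k'.+1 k' a)
  end.

(* F_{i,j} = X_{i,j} - p^(i-j) *)
Definition F (p i j : nat) : R i :=
  [ffun m : 'I_i.+1 => (val m == j)%:Z - (val m == i)%:Z * (p%:Z) ^+ (i - j)].

Definition J (p i : nat) (x : int) (a : R i) : Prop :=
  exists (c0 : R i) (c : 'I_i -> R i),
    a = mulR p i c0 (cst i x) + \sum_(j < i) mulR p i (c j) (F p i j).

(* Main.v *)
Require Import Defs.
From HB Require Import structures.
From mathcomp Require Import all_boot all_order all_algebra.
From mathcomp Require Import zify.
Import Order.TTheory GRing.Theory Num.Theory.
Local Open Scope ring_scope.

Definition tp {k} (a : R k) : int := a ord_max.

Lemma mulR_comm p k (a b : R k) : mulR p k a b = mulR p k b a.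
Proof.
apply/ffunP=> m; rewrite !ffunE exchange_big /=.
apply: eq_bigr => i _; apply: eq_bigr => j _.
by rewrite minnC maxnC [a j * _]mulrC.
Qed.

Lemma top_mul p k (a b : R k) : tp (mulR p k a b) = tp a * tp b.
Proof.
rewrite /tp ffunE big_ord_recr /= big1 ?add0r; last first.
  move=> i _; apply: big1 => j _.
  have : (minn (widen_ord (leqnSn k) i) j < k)%N.
    by rewrite /= gtn_min ltn_ord.
  by case: eqP => // ->; rewrite ltnn.
rewrite big_ord_recr /= big1 ?add0r; last first.
  move=> j _; have : (minn k (widen_ord (leqnSn k) j) < k)%N.
    by rewrite /= gtn_min ltn_ord orbT.
  by case: eqP => // ->; rewrite ltnn.
by rewrite minnn eqxx maxnn subnn expr0 mulr1.
Qed.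

Lemma co_ord k (a : R k) (t : 'I_k.+1) : co k a t = a t.
Proof. by rewrite /co -ltnS ltn_ord inord_val. Qed.

Lemma co_tp k (a : R k) : co k a k = tp a.
Proof. by rewrite /co leqnn /tp; congr (a _); apply: val_inj; rewrite /= inordK. Qed.

Lemma co_big k (a : R k) i : (k < i)%N -> co k a i = 0.
Proof. by rewrite /co ltnNge => /negbTE ->. Qed.

Lemma tp_jnd p i m (a : R i) : tp (jnd p i m a) = tp a.
Proof. by rewrite /tp ffunE /= eqxx co_tp. Qed.

Lemma tp_res p l k (a : R l) :
  tp (res p l k a) = \sum_(i < l.+1 | (k <= i)%N) (p%:Z) ^+ (l - i) * a i.
Proof. by rewrite /tp ffunE /= ltnn. Qed.

Lemma tp_res_id p k (a : R k) : tp (res p k k a) = tp a.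
Proof.
rewrite tp_res big_mkcond big_ord_recr /= big1 ?add0r.
  by rewrite leqnn subnn expr0 mul1r.
by move=> i _; rewrite leqNgt ltn_ord.
Qed.

Lemma tp_res_succ p k (a : R k.+1) :
  tp (res p k.+1 k a) = p%:Z * co k.+1 a k + tp a.
Proof.
rewrite tp_res big_mkcond big_ord_recr big_ord_recr /= big1 ?add0r.
  rewrite leqnn ltnW // subnn subSnn expr0 expr1 mul1r; congr (_ * _ + _).
  by rewrite /co leqW //; congr (a _); apply: val_inj; rewrite /= inordK.
by move=> i _; rewrite leqNgt ltn_ord.
Qed.

Lemma Lp_tp p k (a : R k) : Lp p k a <-> (p%:Z %| tp a)%Z.
Proof.
elim: k a => [|k IH] a /=.
  by have -> : (ord0 : 'I_1) = ord_max by apply: val_inj.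
rewrite IH tp_res_succ.
by rewrite rpredDl // dvdz_mulr.
Qed.

Lemma p_neq0 p : prime p -> (p%:Z != 0).
Proof. by move/prime_gt0; rewrite lt0n. Qed.

Lemma res_id p k (a : R k) : res p k k a = a.
Proof.
apply/ffunP=> j; rewrite ffunE; case: ifP => hj.
  by rewrite subnn expr0 mul1r co_ord.
have -> : j = ord_max.
  by apply: val_inj => /=; apply/eqP; rewrite eqn_leq -ltnS ltn_ord leqNgt hj.
by have := tp_res_id p k a; rewrite tp_res.
Qed.

Lemma sum_pick n (f : nat -> int) m :
  \sum_(j < n) (if (j : nat) == m then f j else 0) = if (m < n)%N then f m else 0.
Proof.
case: ltnP => hm.
  rewrite (bigD1 (Ordinal hm)) //= eqxx big1 ?addr0 // => j hj.
  case: eqP => // hjm; move: hj; suff -> : j = Ordinal hm by rewrite eqxx.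
  by apply: val_inj.
apply: big1 => j _; case: eqP => // hjm; move: (ltn_ord j); rewrite hjm.
by rewrite ltnNge hm.
Qed.

Lemma sum_pick_ord n (f : 'I_n -> int) m :
  \sum_(j < n) (if j == m then f j else 0) = f m.
Proof.
rewrite (bigD1 m) //= eqxx big1 ?addr0 // => j hj.
by rewrite (negbTE hj).
Qed.

Lemma Ssum_diff p k (a : R k) i : (i <= k)%N ->
  Ssum p k a i = co k a i * (p%:Z) ^+ (k - i) + Ssum p k a i.+1.
Proof.
move=> hik; rewrite /Ssum (bigD1 (inord i)) /=; last by rewrite inordK.
rewrite inordK // /co hik; congr (_ + _); apply: eq_bigl => s.
rewrite ltn_neqAle; case: (i <= s)%N; rewrite ?andbF ?andbT //; congr negb.
apply/eqP/eqP => [->|H]; first by rewrite inordK.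
by apply: val_inj; rewrite /= inordK.
Qed.

Lemma jnd_id p k (a : R k) : prime p -> jnd p k k a = a.
Proof.
move=> hp; apply/ffunP=> i; rewrite ffunE.
case: eqP => hi.
  by rewrite co_tp /tp; congr (a _); apply: val_inj.
have hik : (i < k)%N.
  by move: (ltn_ord i) hi; rewrite ltnS leq_eqVlt => /orP[/eqP|].
rewrite leqNgt hik /= subnn expn0 !expr1 Ssum_diff; last exact: ltnW.
rewrite addrK mulzK.
  by rewrite co_ord.
by rewrite expf_neq0 // p_neq0.
Qed.

Lemma mulR_cstl p k x (b : R k) m : (mulR p k (cst k x) b) m = x * b m.
Proof.
rewrite ffunE big_ord_recr /= big1 ?add0r; last first.
  move=> i _; apply: big1 => j _; rewrite ffunE /= (ltn_eqF (ltn_ord i)).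
  by rewrite !mul0r if_same.
rewrite ffunE /= eqxx.
under eq_bigr => j _ do rewrite (minn_idPr (leq_ord j)) (maxn_idPl (leq_ord j)) subnn expr0 mulr1.
under eq_bigr => j _ do rewrite -(co_ord _ b j).
by rewrite sum_pick_ord co_ord.
Qed.

Definition e k t : R k := [ffun m : 'I_k.+1 => if val m == t then 1 else 0].

Definition w p k (z : R k.+1) : R k :=
  [ffun t : 'I_k.+1 => if (val t < k)%N then p%:Z * co k.+1 z t
                       else p%:Z * co k.+1 z k + tp z].

Lemma mulR_e p k (z : R k.+1) : mulR p k.+1 (e k.+1 k) z = ind k k.+1 (w p k z).
Proof.
apply/ffunP => m; rewrite !ffunE.
rewrite (bigD1 (Ordinal (leqW (ltnSn k)))) //=.
rewrite [X in _ + X]big1 ?addr0; last first.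
  move=> i hi; apply: big1 => j _; rewrite ffunE.
  have -> : (val i == k) = false.
    by apply/negbTE; apply: contra hi => /eqP h; apply/eqP/val_inj.
  by rewrite /= !mul0r if_same.
rewrite big_ord_recr big_ord_recr /= !ffunE /= eqxx !mul1r.
under eq_bigr => j _ do rewrite mul1r (minn_idPr (ltnW (ltn_ord j))) (maxn_idPl (ltnW (ltn_ord j))) subSnn expr1 -[z _](co_ord _ z) /=.
rewrite (sum_pick _ (fun j => co k.+1 z j * p%:Z)) minnn maxnn subSnn expr1 (minn_idPl (leqnSn k)) (maxn_idPr (leqnSn k)) subnn expr0.
rewrite /co; case: (ltngtP m k) => hm.
- have hm1 : (m <= k.+1)%N by rewrite ltnW // ltnW.
  have hv : val (inord m : 'I_k.+1) = m by apply: inordK; rewrite ltnS ltnW.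
  by rewrite hm1 ffunE hv hm hv /co hm1 !addr0 mulrC.
- by [].
- have hv : val (inord k : 'I_k.+1) = k by apply: inordK.
  rewrite hm ffunE hv ltnn /co leqnSn add0r mulr1 mulrC; congr (_ + _).
  by congr (_ * z _); apply: val_inj; rewrite /= inordK.
Qed.

Lemma tp_e_res p k j : (p%:Z %| tp (res p k.+1 j (e k.+1 k)))%Z.
Proof.
rewrite tp_res; apply: rpred_sum => i _; rewrite ffunE.
case: eqP => [->|_]; last by rewrite mulr0 dvdz0.
by rewrite subSnn expr1 mulr1 dvdzz.
Qed.

Lemma co_cst k x : co k (cst k x) k = x.
Proof. by rewrite co_tp /tp ffunE /= eqxx. Qed.

Lemma Ssum_cst p k x i : (i <= k)%N -> Ssum p k (cst k x) i = x.
Proof.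
move=> hi; rewrite /Ssum big_mkcond big_ord_recr /= big1 ?add0r.
  by rewrite ffunE /= eqxx hi subnn expr0 mulr1.
move=> j _; rewrite ffunE /= (ltn_eqF (ltn_ord j)) mul0r; by case: ifP.
Qed.

Definition cc p : int := (((p%:Z) ^+ (p ^ 1) - (p%:Z) ^+ (p ^ 0)) %/ (p%:Z) ^+ 1)%Z.

Lemma jnd_cst p k :
  cst k.+1 (p%:Z) = jnd p k k.+1 (cst k (p%:Z)) + mulR p k.+1 (cst k.+1 (- cc p)) (e k.+1 k).
Proof.
apply/ffunP => m; rewrite ffunE ffunE mulR_cstl !ffunE.
rewrite -[val m]/(nat_of_ord m).
case: (ltngtP m k.+1) => hm.
- case: (ltngtP m k) => hm2.
  + rewrite Ssum_cst; last exact: ltnW hm2.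
    by rewrite Ssum_cst // subrr div0z mulr0 addr0.
  + by move: hm; rewrite ltnS leqNgt hm2.
  + by rewrite hm2 subSnn subnn mulr1 co_cst /cc addrN.
- by move: (ltn_ord m); rewrite ltnNge hm.
- by rewrite hm co_cst (gtn_eqF (ltnSn k)) mulr0 addr0.
Qed.

Lemma tp_add k (a b : R k) : tp (a + b) = tp a + tp b.
Proof. by rewrite /tp ffunE. Qed.
Lemma tp_opp k (a : R k) : tp (- a) = - tp a.
Proof. by rewrite /tp ffunE. Qed.
Lemma tp_0 k : tp (0 : R k) = 0.
Proof. by rewrite /tp ffunE. Qed.
Lemma tp_cst k x : tp (cst k x) = x.
Proof. by rewrite /tp ffunE /= eqxx. Qed.

Lemma Lp_idealR p k : is_idealR p k (Lp p k).
Proof.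
split.
- by rewrite Lp_tp tp_0 dvdz0.
- by move=> a b; rewrite !Lp_tp tp_add; apply: rpredD.
- by move=> a; rewrite !Lp_tp tp_opp rpredN.
- by move=> c a; rewrite !Lp_tp top_mul; apply: dvdz_mull.
Qed.

Lemma prime_dvdzM p x y : prime p -> (p%:Z %| x * y)%Z -> (p%:Z %| x)%Z \/ (p%:Z %| y)%Z.
Proof.
by move=> hp; rewrite !dvdzE abszM /= Euclid_dvdM // => /orP.
Qed.

Lemma bz_mul x (b : bool) : x * (b : nat)%:Z = if b then x else 0.
Proof. by case: b; rewrite ?mulr1 ?mulr0. Qed.

Lemma Lp_J p k a : prime p -> Lp p k a <-> J p k (p%:Z) a.
Proof.
move=> hp; rewrite Lp_tp; split; last first.
  case=> c0 [c ->]; rewrite tp_add top_mul tp_cst; apply: rpredD.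
    exact: dvdz_mull (dvdzz _).
  rewrite /tp sum_ffunE; apply: rpred_sum => j _.
  rewrite -/(tp _) top_mul; apply: dvdz_mull.
  rewrite /tp ffunE /= (gtn_eqF (ltn_ord j)) eqxx /= mul1r; apply: rpredB.
    exact: dvdz0.
  by apply: dvdz_exp (dvdzz _); rewrite subn_gt0.
move=> ha.
set S := \sum_(j < k) co k a j * (p%:Z) ^+ (k - j).
have hS : (p%:Z %| tp a + S)%Z.
  apply: rpredD => //; apply: rpred_sum => j _; apply: dvdz_mull.
  by apply: dvdz_exp (dvdzz _); rewrite subn_gt0.
exists (cst k ((tp a + S) %/ p%:Z)%Z), (fun j => cst k (co k a j)).
apply/ffunP => m; rewrite ffunE sum_ffunE mulR_comm mulR_cstl ffunE.
under eq_bigr => j _ do rewrite mulR_cstl ffunE.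
case: (ltnP m k) => hm.
  rewrite (ltn_eqF hm) mulr0 add0r.
  under eq_bigr => j _ do rewrite /= mul0r subr0 bz_mul eq_sym.
  by rewrite (sum_pick _ (fun j => co k a j)) hm co_ord.
have -> : m = ord_max by apply: val_inj; apply/eqP; rewrite eqn_leq hm -ltnS ltn_ord.
rewrite /= eqxx mulrC divzK //.
under eq_bigr => j _ do rewrite (gtn_eqF (ltn_ord j)) /= mul1r sub0r mulrN.
by rewrite sumrN /S addrK.
Qed.

Theorem proposition6 (p r l : nat) (hp : prime p) (hlr : (l <= r)%N) :
  (forall k, (1 <= k <= l)%N -> forall a : R k, Lp p k a <-> J p k (p%:Z) a) /\
  is_ideal p l (Lp p) /\ prime_ideal p l (Lp p) /\
  (forall I : idfamily, is_ideal p l I ->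
     (forall a : R 0, I 0%N a <-> (p%:Z %| a ord0)%Z) ->
     prime_ideal p l I ->
     forall k, (k <= l)%N -> forall a : R k, I k a <-> Lp p k a).
Proof.
split; first by move=> k _ a; apply: Lp_J.
have LpI : is_ideal p l (Lp p).
  split; first by move=> k _; apply: Lp_idealR.
  move=> k hk; split.
  - by move=> a _; rewrite Lp_tp /tp ffunE co_big // dvdz0.
  - by move=> a.
  - by move=> a; rewrite !Lp_tp tp_jnd.
split => //; split.
  split.
    move=> H; have := H (cst 0 1); rewrite /= ffunE /= dvdz1 /= => /eqP hp1.
    by move: hp; rewrite hp1.
  move=> l' k hlk hk a b H.
  move: (H k l' (leqnn k) (leqnn l')); rewrite !Lp_tp top_mul !tp_jnd !tp_res_id.
  exact: prime_dvdzM.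
move=> I [hI1 hI2] h0 [_ hpr].
have sub1 : forall k, (k <= l)%N -> forall a, I k a -> Lp p k a.
  elim => [|k IH] hk a0 ha; first by rewrite /= -h0.
  have [_ hres _] := hI2 k hk.
  by apply: IH (ltnW hk) _ (hres _ ha).
have sub2 : forall k, (k <= l)%N -> forall m, (m <= k)%N -> forall a, Lp p m a -> I m a.
  elim => [|k IH] hk m hm a0 ha.
    by move: hm; rewrite leqn0 => /eqP hm; subst m; apply/h0.
  case: (ltnP m k.+1) => hm'.
    exact: IH (ltnW hk) m hm' a0 ha.
  have hmk : m = k.+1 by apply/eqP; rewrite eqn_leq hm hm'.
  subst m.
  have IH' := IH (ltnW hk).
  have [hind hres hjnd] := hI2 k hk.
  have [I0 Iadd Iopp Imul] := hI1 k.+1 hk.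
  have hA : forall z : R k.+1, (p%:Z %| tp z)%Z -> I k.+1 (mulR p k.+1 (e k.+1 k) z).
    move=> z hz; rewrite mulR_e; apply: (hind); apply: (IH' k (leqnn k)).
    rewrite Lp_tp /tp ffunE /= ltnn; apply: rpredD => //.
    exact: dvdz_mulr (dvdzz _).
  have he : I k.+1 (e k.+1 k).
    suff : I k.+1 (e k.+1 k) \/ I k.+1 (e k.+1 k) by case.
    apply: (hpr k.+1 k.+1 (leqnn _) hk) => i j hi hj.
    case: (ltnP (maxn i j) k.+1) => hmax.
      apply: (IH' (maxn i j)); first by [].
      rewrite Lp_tp top_mul tp_jnd; apply: dvdz_mulr; exact: tp_e_res.
    have hmx : maxn i j = k.+1 by apply/eqP; rewrite eqn_leq hmax geq_max hi hj.
    rewrite hmx.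
    case: (eqVneq i k.+1) => hik.
      subst i; rewrite res_id jnd_id //; apply: (hA); rewrite tp_jnd; exact: tp_e_res.
    have hjk : j = k.+1 by lia.
    subst j; rewrite res_id jnd_id // mulR_comm; apply: (hA); rewrite tp_jnd; exact: tp_e_res.
  have hpI : I k.+1 (cst k.+1 p).
    rewrite jnd_cst; apply: (Iadd); last exact: Imul.
    by apply: (hjnd); apply: (IH' k (leqnn k)); rewrite Lp_tp tp_cst dvdzz.
  move: ha; rewrite Lp_tp => ha.
  pose w' : R k := [ffun t : 'I_k.+1 => if val t == k then 0 else co k.+1 a0 t].
  have -> : a0 = ind k k.+1 w' + mulR p k.+1 (cst k.+1 (co k.+1 a0 k)) (e k.+1 k)
              + mulR p k.+1 (cst k.+1 (tp a0 %/ p%:Z)%Z) (cst k.+1 p).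
    apply/ffunP => m; rewrite [RHS]ffunE [X in X + _]ffunE !mulR_cstl !ffunE.
    have hv : (val m == k) = (nat_of_ord m == k) by [].
    rewrite hv /co leqnSn.
    case: (ltngtP m k.+1) => hq.
    - have hv2 : val (inord m : 'I_k.+1) = m by apply: inordK.
      have hv3 : nat_of_ord (inord m : 'I_k.+1) = m := hv2.
      rewrite (hq : (m <= k)%N) ffunE hv2 hv3 mulr0 addr0 -(co_ord _ a0 m) /co.
      case: (ltngtP m k) => hq2.
      + by rewrite ltnW // mulr0 addr0.
      + by move: hq; rewrite ltnS leqNgt hq2.
      + by rewrite mulr1 add0r hq2 leqnSn.
    - by move: (ltn_ord m); rewrite ltnNge hq.
    - rewrite hq ltnn (gtn_eqF (ltnSn k)) mulr0 !add0r divzK //.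
      by rewrite /tp; congr (a0 _); apply: val_inj.
  apply: (Iadd); last exact: Imul.
  apply: (Iadd); last exact: Imul.
  apply: (hind); apply: (IH' k (leqnn k)).
  by rewrite Lp_tp /tp ffunE /= eqxx dvdz0.
move=> k hk a; split; first exact: sub1.
exact: (sub2 k hk k (leqnn k) a).
Qed.
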